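(* Let $m,n\geq 2$. Let $\pi\in S(\mathbb{Z}_m)$ and $\pi_x\in S(\mathbb{Z}_n)$ for each $x\in\mathbb{Z}_m$, and define $\sigma\in S(\mathbb{Z}_m\times\mathbb{Z}_n)$ by $\sigma(x,y)=(\pi(x),\pi_x(y))$. Let $c\in S(\mathbb{Z}_m\times\mathbb{Z}_n)$ be given by $c(x,y)=(x+1,y)$ if $x\neq m-1$ and $c(x,y)=(x+1,y+1)$ if $x=m-1$. Let $i\in\mathbb{Z}_m$, let $b$ be a positive integer, and let $t$ be an integer such that the permutation $y\mapsto\pi_i(y+t)$ of $\mathbb{Z}_n$ has at least $b$ cycles. Then there is an integer $k$ such that $\sigma c^k$ has at least $b+1$ cycles.
   Context: $S(X)$ denotes the set of bijections of a finite set $X$; the number of cycles of a permutation counts fixed points as cycles. (Under the bijection $\mathbb{Z}_{mn}\to\mathbb{Z}_m\times\mathbb{Z}_n$, $r+mt\mapsto(r,t)$ for $0\le r<m$, $0\le t<n$, the map $c$ corresponds to $z\mapsto z+1$.) *)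

(* Defs.v *)
From HB Require Import structures.
From mathcomp Require Import all_boot all_order all_fingroup all_algebra.
Set Implicit Arguments. Unset Strict Implicit. Unset Printing Implicit Defensive.
Import GRing.Theory.
Local Open Scope ring_scope.

(* Number of cycles of a permutation (fixed points count as cycles). *)
Definition ncycles (T : finType) (s : {perm T}) : nat := #|porbits s|.

Definition zpow (T : finType) (s : {perm T}) (k : int) : {perm T} :=
  match k with
  | Posz n => (s ^+ n)%g
  | Negz n => (s ^- n.+1)%g
  end.

(* Functional composition f \o g of permutations (apply g first).
   Note: in MathComp (s * t) x = t (s x), hence the swap. *)
Definition perm_fcomp (T : finType) (f g : {perm T}) : {perm T} := (g * f)%g.

Section Constructions.
Variables m n : nat.

Definition sigma_fun (pi : {perm 'Z_m}) (pix : 'Z_m -> {perm 'Z_n})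
  (p : 'Z_m * 'Z_n) : 'Z_m * 'Z_n := (pi p.1, pix p.1 p.2).

Lemma sigma_inj pi pix : injective (sigma_fun pi pix).
Proof.
move=> [x y] [x' y'] [/perm_inj ex]; subst x' => /perm_inj ->; done.
Qed.

Definition sigma_perm pi pix : {perm 'Z_m * 'Z_n} := perm (@sigma_inj pi pix).

Definition c_fun (p : 'Z_m * 'Z_n) : 'Z_m * 'Z_n :=
  (p.1 + 1, if p.1 == (m.-1)%:R then p.2 + 1 else p.2).

Lemma c_inj : injective c_fun.
Proof.
move=> [x y] [x' y'] E.
have ex : x = x' by apply: (@addIr _ 1); exact: (congr1 fst E).
subst x'; have := congr1 snd E; rewrite /c_fun /=.
by case: ifP => _ => [/(@addIr _ 1) -> | ->].
Qed.

Definition c_perm : {perm 'Z_m * 'Z_n} := perm c_inj.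

Definition shift_fun (q : {perm 'Z_n}) (t : int) (y : 'Z_n) : 'Z_n :=
  q (y + t%:~R).

Lemma shift_inj q t : injective (shift_fun q t).
Proof. by move=> y y' /perm_inj; apply: (@addIr _ t%:~R). Qed.

Definition shift_perm q t : {perm 'Z_n} := perm (@shift_inj q t).

End Constructions.

(* Main.v *)
Require Import Defs.
From mathcomp Require Import all_boot all_order all_fingroup all_algebra zify.
Set Implicit Arguments. Unset Strict Implicit.
Import GRing.Theory.
Lemma count_lt (T U : finType) (tau : {perm T}) (q : {perm U}) (f : U -> T) :
  injective f -> (forall u, tau (f u) = f (q u)) ->
  forall p1, (forall u, f u != p1) -> #|porbits q| < #|porbits tau|.
Proof.
move=> finj hf p1 hp1.
have itf j u : (tau ^+ j)%g (f u) = f ((q ^+ j)%g u).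
  by rewrite !permX; elim: j => //= j ->; rewrite hf.
have po u : porbit tau (f u) = f @: porbit q u.
  apply/setP => z; apply/porbitP/imsetP => [[j ->]|[w /porbitP [j ->] ->]].
    by exists ((q ^+ j)%g u); [exact: mem_porbit | rewrite itf].
  by exists j; rewrite itf.
pose g := fun O : {set U} => f @: O.
have sub : porbit tau p1 |: (g @: porbits q) \subset porbits tau.
  apply/subsetP => O; rewrite inE => /orP [/set1P -> | /imsetP [O' /imsetP [u _ ->] ->]].
    exact: imset_f.
  by rewrite /g -po; exact: imset_f.
apply: leq_trans (subset_leq_card sub).
rewrite cardsU1 card_imset; last exact: imset_inj.
suff -> : porbit tau p1 \notin g @: porbits q by [].
apply/imsetP => -[O _ hO].
have : p1 \in g O by rewrite -hO porbit_id.
by case/imsetP => u _ /esym/eqP; rewrite (negbTE (hp1 u)).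
Qed.

Section S.
Variables m' n' : nat.
Local Notation M := m'.+2.
Local Notation N := n'.+2.
Local Notation c := (c_perm M N).
Lemma c_small (x : 'Z_M) (y : 'Z_N) j : (x + j < M)%N ->
  val (iter j c (x, y)).1 = (x + j)%N /\ (iter j c (x, y)).2 = y.
Proof.
elim: j => [|j IH] hj; first by rewrite addn0.
have [h1 h2] := IH ltac:(lia).
rewrite /= permE /c_fun /=.
set p := iter j c (x, y) in h1 h2 *.
have ne : p.1 != ((M.-1)%:R)%R.
  apply/eqP => /(congr1 val) /=. rewrite h1 val_Zp_nat // modn_small //. lia.
rewrite (negbTE ne); split => //.
rewrite (modn_small (_ : 1 < M)) // h1 modn_small; [lia | ]. change (Zp_trunc M) with m' in *. lia.
Qed.

Lemma c_wrap (x : 'Z_M) (y : 'Z_N) : val x = M.-1 -> c (x, y) = (0%R, (y + 1)%R).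
Proof.
move=> hx; rewrite permE /c_fun /=.
have -> : x = ((M.-1)%:R)%R by apply: val_inj => /=; rewrite hx (@val_Zp_nat M) // modn_small.
rewrite /= eqxx; congr (_, _); apply: val_inj => /=. change (Zp_trunc M) with m'. rewrite (@val_Zp_nat M) // (modn_small (_ : m'.+1 < M)) // (modn_small (_ : 1 < M)) // addn1 modnn.
by []. Qed.

Lemma c_to0 (x : 'Z_M) (y : 'Z_N) : iter (M - val x) c (x, y) = (0%R, (y + 1)%R).
Proof.
case: x => [xv lx]; set x := Ordinal lx.
have lx' : (xv < M)%N := lx.
have e : (M - xv = 1 + (M.-1 - xv))%N by lia.
rewrite /= e iterD.
have [h1 h2] := c_small (x:=x) y (j := (M.-1 - xv)) ltac:(rewrite /=; lia).
set p := iter _ c (x, y) in h1 h2 *.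
by rewrite /= (surjective_pairing p) h2 c_wrap; last by rewrite h1 /x /=; lia.
Qed.

Lemma c_from0 (x : 'Z_M) (y : 'Z_N) : iter (val x) c (0%R, y) = (x, y).
Proof.
have hlt : (nat_of_ord (0%R : 'Z_M) + val x < M)%N by rewrite /= add0n; exact: ltn_ord.
have [h3 h4] := c_small y hlt.
move: h3 h4; case: (iter _ c _) => a b /= h3 ->; congr (_, _); apply: val_inj.
by rewrite /= h3.
Qed.

Lemma c_M (x : 'Z_M) (y : 'Z_N) : iter M c (x, y) = (x, (y + 1)%R).
Proof.
have lx := ltn_ord x.
have e : (M = val x + (M - val x))%N by rewrite subnKC // ltnW.
by rewrite [in LHS](_ : iter M c = iter (val x + (M - val x)) c) ?iterD ?c_to0 ?c_from0 // -e.
Qed.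

Lemma c_Ms (x : 'Z_M) (y : 'Z_N) s : iter (M * s) c (x, y) = (x, (y + s%:R)%R).
Proof.
elim: s => [|s IH]; first by rewrite muln0 addr0.
by rewrite mulnS iterD IH c_M -addrA -(natrD _ s 1) addn1.
Qed.

Lemma main_MN (pi : {perm 'Z_M}) (pix : 'Z_M -> {perm 'Z_N}) (i : 'Z_M) (t : int) :
  exists k : nat, (ncycles (shift_perm (pix i) t) <
     ncycles (perm_fcomp (sigma_perm pi pix) (c ^+ k)%g))%N.
Proof.
pose x0 := pi i.
pose s := val (t%:~R - 1 : 'Z_N)%R.
have hs : (s%:R = t%:~R - 1 :> 'Z_N)%R by rewrite natr_Zp.
exists (M * s + (val i + (M - val x0)))%N.
rewrite /ncycles /perm_fcomp.
apply: (@count_lt _ _ _ _ (fun y => (x0, y)) _ _ ((x0 + 1)%R, 0%R)).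
- by move=> y1 y2 [].
- move=> y; rewrite permM !permX iterD [iter (_ + _) _ _]iterD c_to0 c_from0 c_Ms.
  rewrite !permE /sigma_fun /shift_fun /=; congr (_, _).
  by rewrite hs -addrA (addrC 1%R) subrK.
- move=> u; apply/eqP => -[h _].
  have : (x0 + 1 - x0 = x0 - x0)%R by rewrite -h.
  by rewrite addrC addKr subrr => /eqP; rewrite oner_eq0.
Qed.
End S.

Theorem lemma4p9 (m n : nat) (hm : (2 <= m)%N) (hn : (2 <= n)%N)
  (pi : {perm 'Z_m}) (pix : 'Z_m -> {perm 'Z_n})
  (i : 'Z_m) (b : nat) (hb : (0 < b)%N) (t : int)
  (ht : (b <= ncycles (shift_perm (pix i) t))%N) :
  exists k : int,
    (b.+1 <= ncycles (perm_fcomp (sigma_perm pi pix) (zpow (c_perm m n) k)))%N.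
Proof.
case: m hm pi pix i ht => [|[|m']] // _; case: n hn => [|[|n']] // _ pi pix i ht.
have [k hk] := main_MN pi pix i t.
by exists (Posz k); exact: leq_ltn_trans ht hk.
Qed.
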